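(* Let $T(X)=\sum_i V_i^*XV_i$ be a completely positive map on $M_d$ (acting on $H=\mathbb{C}^d$) with $T(I)\le I$ and finite stabilization index, and let $Q$ be its orbit-support projection. Then $T$ is corner-faithful if and only if \[ QH\cap\bigcap_i\ker(V_i^* )=\{0\}, \] equivalently, for every $0\ne v\in QH$ there exists $i$ with $V_i^*v\ne0$.
   Context: $d(T)=I-T(I)$; the stabilization index is $n_T=\min\{n\ge1: T^n(d(T))=0\}$. For positive semidefinite $x$, $\mathrm{supp}(x)$ is the orthogonal projection onto the range of $x$. The orbit-support projection is $Q=\bigvee_{k<n_T}\mathrm{supp}(T^k(d(T)))$. $T$ is corner-faithful if every $x\ge0$, $x\ne0$ with $\mathrm{supp}(x)\le Q$ satisfies $T(x)\ne0$. *)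

(* Defs.v *)
(* Complex scalars: an arbitrary numClosedFieldType C
   (e.g. C = R[i] for a realType R, or algC). *)
From HB Require Import structures.
From mathcomp Require Import all_boot all_order all_algebra.
From mathcomp Require Import sesquilinear spectral.
Set Implicit Arguments.
Unset Strict Implicit.
Unset Printing Implicit Defensive.
Import Order.TTheory GRing.Theory Num.Theory.
Local Open Scope ring_scope.
Local Open Scope sesquilinear_scope.

Section Defs.
Variables (C : numClosedFieldType) (d : nat).

(* Operators on H = C^d are d x d matrices acting on column vectors
   v : 'cV_d by v |-> X *m v; the adjoint is X^* = X ^t* (conjugate transpose). *)
Definition adj (X : 'M[C]_d) : 'M[C]_d := X ^t*.

Definition psd (X : 'M[C]_d) : Prop :=
  forall v : 'cV[C]_d, 0 <= (v ^t* *m X *m v) 0 0.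

Definition loewner_le (X Y : 'M[C]_d) : Prop := psd (Y - X).

Definition kraus (r : nat) (V : 'I_r -> 'M[C]_d) (X : 'M[C]_d) : 'M[C]_d :=
  \sum_(i < r) adj (V i) *m X *m V i.

Definition defect (T : 'M[C]_d -> 'M[C]_d) : 'M[C]_d := 1%:M - T 1%:M.

Definition stab_index (T : 'M[C]_d -> 'M[C]_d) (n : nat) : Prop :=
  [/\ (1 <= n)%N, iter n T (defect T) = 0 &
      forall m, (1 <= m)%N -> (m < n)%N -> iter m T (defect T) != 0].

(* Orthogonal projection onto the column space (range) of A.
   proj_ortho U is the (row-vector convention) orthogonal projection onto the
   row space of U; transposing converts to the column-vector convention. *)
Definition range_proj m (A : 'M[C]_(d, m)) : 'M[C]_d := (proj_ortho A^T)^T.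

Definition supp (x : 'M[C]_d) : 'M[C]_d := range_proj x.

Definition pjoin (P R : 'M[C]_d) : 'M[C]_d := range_proj (row_mx P R).

Definition orbit_support (T : 'M[C]_d -> 'M[C]_d) (n : nat) : 'M[C]_d :=
  \big[pjoin/0]_(k < n) supp (iter k T (defect T)).

Definition corner_faithful (T : 'M[C]_d -> 'M[C]_d) (Q : 'M[C]_d) : Prop :=
  forall x : 'M[C]_d, psd x -> x != 0 -> loewner_le (supp x) Q -> T x != 0.

End Defs.

(* Main.v *)
Require Import Defs.
From HB Require Import structures.
From mathcomp Require Import all_boot all_order all_algebra.
From mathcomp Require Import sesquilinear spectral ring.
Set Implicit Arguments.
Unset Strict Implicit.
Unset Printing Implicit Defensive.
Import Order.TTheory GRing.Theory Num.Theory.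
Local Open Scope ring_scope.
Local Open Scope sesquilinear_scope.

Section Aux.
Variable C : numClosedFieldType.

Lemma adjM m n p (A : 'M[C]_(m, n)) (B : 'M_(n, p)) : (A *m B)^t* = B^t* *m A^t*.
Proof. by rewrite trmx_mul map_mxM. Qed.
Lemma adjD m n (A B : 'M[C]_(m, n)) : (A + B)^t* = A^t* + B^t*.
Proof. by apply/matrixP => i j; rewrite !mxE rmorphD. Qed.
Lemma adjB m n (A B : 'M[C]_(m, n)) : (A - B)^t* = A^t* - B^t*.
Proof. by apply/matrixP => i j; rewrite !mxE rmorphB. Qed.
Lemma adjZ m n s (A : 'M[C]_(m, n)) : (s *: A)^t* = s^* *: A^t*.
Proof. by apply/matrixP => i j; rewrite !mxE rmorphM. Qed.
Lemma adj1 n : (1%:M : 'M[C]_n)^t* = 1%:M.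
Proof. by apply/matrixP => i j; rewrite !mxE rmorph_nat eq_sym. Qed.
Lemma adjK m n (A : 'M[C]_(m, n)) : A^t*^t* = A.
Proof. exact: trmxCK. Qed.

Definition sf n (X : 'M[C]_n) (a c : 'cV[C]_n) := (a^t* *m X *m c) 0 0.

Lemma sfDl n (X : 'M[C]_n) a1 a2 c : sf X (a1 + a2) c = sf X a1 c + sf X a2 c.
Proof. by rewrite /sf adjD !mulmxDl mxE. Qed.
Lemma sfDr n (X : 'M[C]_n) a c1 c2 : sf X a (c1 + c2) = sf X a c1 + sf X a c2.
Proof. by rewrite /sf mulmxDr mxE. Qed.
Lemma sfZl n (X : 'M[C]_n) s a c : sf X (s *: a) c = s^* * sf X a c.
Proof. by rewrite /sf adjZ -!scalemxAl mxE. Qed.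
Lemma sfZr n (X : 'M[C]_n) s a c : sf X a (s *: c) = s * sf X a c.
Proof. by rewrite /sf -!scalemxAr mxE. Qed.
Lemma adj11 (M : 'M[C]_1) : (M^t*) 0 0 = (M 0 0)^*.
Proof. by rewrite !mxE. Qed.
Lemma sf_conj n (X : 'M[C]_n) a c : (sf X a c)^* = sf (X^t*) c a.
Proof. by rewrite /sf -adj11 !adjM adjK mulmxA. Qed.
Lemma sfE n (X : 'M[C]_n) j k : sf X (delta_mx j 0) (delta_mx k 0) = X j k.
Proof.
rewrite /sf.
have -> : (delta_mx j 0 : 'cV[C]_n)^t* = delta_mx 0 j.
  by apply/matrixP => a b; rewrite !mxE rmorph_nat andbC.
by rewrite -rowE -colE !mxE.
Qed.

Lemma norm_ge0 n (a : 'cV[C]_n) : 0 <= (a^t* *m a) 0 0.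
Proof.
rewrite mxE; apply: sumr_ge0 => i _; rewrite !mxE mulrC; exact: mul_conjC_ge0.
Qed.
Lemma norm_eq0 n (a : 'cV[C]_n) : (a^t* *m a) 0 0 = 0 -> a = 0.
Proof.
rewrite mxE => /psumr_eq0P H.
have {}H := H (fun k _ => ltac:(rewrite !mxE mulrC; exact: mul_conjC_ge0)).
apply/matrixP => i j; rewrite (ord1 j) mxE.
have := H i isT; rewrite !mxE => /eqP.
by rewrite mulrC mul_conjC_eq0 => /eqP.
Qed.

Lemma mx0_cols m n (M : 'M[C]_(m, n)) : (forall y : 'cV_n, M *m y = 0) -> M = 0.
Proof.
move=> H; apply/matrixP => a b; have := H (delta_mx b 0).
by rewrite -colE => /matrixP/(_ a 0); rewrite !mxE.
Qed.


Lemma psd_herm n (X : 'M[C]_n) : (forall v, 0 <= sf X v v) -> X^t* = X.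
Proof.
move=> psdX.
pose g a c := sf X a c - sf (X^t*) a c.
have g0 a : g a a = 0 by rewrite /g -sf_conj geC0_conj ?subrr.
have gDl a1 a2 c : g (a1 + a2) c = g a1 c + g a2 c.
  by rewrite /g !sfDl; ring.
have gDr a c1 c2 : g a (c1 + c2) = g a c1 + g a c2.
  by rewrite /g !sfDr; ring.
have gZl s a c : g (s *: a) c = s^* * g a c by rewrite /g !sfZl; ring.
have gZr s a c : g a (s *: c) = s * g a c by rewrite /g !sfZr; ring.
apply/matrixP => j k; rewrite -!sfE.
set ej : 'cV[C]_n := delta_mx j 0; set ek : 'cV[C]_n := delta_mx k 0.
suff : g ej ek = 0 by move/eqP; rewrite subr_eq0 => /eqP.
have e1 := g0 (ej + ek); rewrite gDl !gDr !g0 add0r addr0 in e1.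
have e2 := g0 (ej + 'i *: ek); rewrite gDl !gDr !gZl !gZr !g0 add0r !mulr0 addr0 conjCi in e2.
have : 'i * (g ej ek - g ek ej) = 0 by rewrite -e2; ring.
move=> /eqP; rewrite mulf_eq0 (negbTE (@neq0Ci C)) /= subr_eq0 => /eqP e3.
move: e1; rewrite -e3 -mulr2n => /eqP; rewrite mulrn_eq0 /= => /eqP.
done.
Qed.

Lemma psd_ker n (X : 'M[C]_n) y : (forall v, 0 <= sf X v v) -> sf X y y = 0 ->
  X *m y = 0.
Proof.
move=> psdX y0; have hX := psd_herm psdX.
set z := X *m y; set b := (z^t* *m z) 0 0; set c := sf X z z.
have b0 : 0 <= b by exact: norm_ge0.
have c0 : 0 <= c by exact: psdX.
have yz : sf X y z = b by rewrite /sf /b /z; congr (_ 0 0); rewrite -{1}hX -adjM.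
have zy : sf X z y = b by rewrite /sf /b /z -mulmxA.
have := psdX ((c + 1) *: y + (- b) *: z).
have c1 : 0 <= c + 1 by rewrite addr_ge0.
have nb : (- b)^* = - b by apply: conj_Creal; rewrite realN; exact: ger0_real.
rewrite !sfDl !sfDr !sfZl !sfZr y0 yz zy -/c nb (geC0_conj c1).
have -> : (c + 1) * ((c + 1) * 0) + (c + 1) * (- b * b) + (- b * ((c + 1) * b) + - b * (- b * c)) = - (b ^+ 2 * (c + 2%:R)) by ring.
rewrite oppr_ge0 => h.
have h2 : b ^+ 2 * (c + 2%:R) = 0.
  apply/le_anti; rewrite h /=; apply: mulr_ge0; first exact: exprn_ge0.
  by rewrite addr_ge0.
move: h2 => /eqP; rewrite mulf_eq0 expf_eq0 /= => /orP[/eqP bz|].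
  exact: norm_eq0.
by rewrite gt_eqF // ltr_wpDl.
Qed.

Lemma herm_idem_psd n (E : 'M[C]_n) : E^t* = E -> E *m E = E -> forall v, 0 <= sf E v v.
Proof.
move=> hE iE v; rewrite /sf.
have -> : v^t* *m E *m v = (E *m v)^t* *m (E *m v).
  by rewrite adjM hE mulmxA -(mulmxA _ E E) iE.
exact: norm_ge0.
Qed.


Lemma adjT m n (A : 'M[C]_(m, n)) : (A^T)^t* = (A^t*)^T.
Proof. by apply/matrixP => i j; rewrite !mxE. Qed.

Lemma rp_facts d m (A : 'M[C]_(d, m)) :
  [/\ (range_proj A)^t* = range_proj A, range_proj A *m range_proj A = range_proj A,
      range_proj A *m A = A & exists Y : 'M_(m, d), range_proj A = A *m Y].
Proof.
rewrite /range_proj; set P := proj_ortho A^T.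
have [X hX] : exists X, P = X *m A^T.
  by have := proj_ortho_sub (A^T) (1%:M : 'M_d); rewrite mul1mx => /submxP.
have h2 : (1%:M - P) *m (A^T)^t* = 0.
  have := proj_ortho_compl_sub (A^T) (1%:M : 'M_d); rewrite mul1mx => h; exact/orthomx1P.
have e : P *m P^t* = P^t*.
  have : (1%:M - P) *m P^t* = 0 by rewrite {2}hX adjM mulmxA h2 mul0mx.
  by rewrite mulmxBl mul1mx => /eqP; rewrite subr_eq0 eq_sym => /eqP.
have hP : P^t* = P.
  have e2 : (P *m P^t*)^t* = P *m P^t* by rewrite adjM adjK.
  by rewrite -{1}e -e2 e adjK.
split.
- by rewrite adjT hP.
- by rewrite -trmx_mul proj_ortho_proj.
- have := proj_ortho_id (submx_refl A^T); rewrite -/P => h.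
  by rewrite -[A in RHS]trmxK -h (trmx_mul (A^T) P) trmxK.
- by exists X^T; rewrite hX trmx_mul trmxK.
Qed.

Lemma proj_le n (E F : 'M[C]_n) : E^t* = E -> E *m E = E -> F^t* = F -> F *m F = F ->
  E *m F = F -> forall v, 0 <= sf (E - F) v v.
Proof.
move=> hE iE hF iF EF; apply: herm_idem_psd; first by rewrite adjB hE hF.
have FE : F *m E = F by rewrite -{1}hF -hE -adjM EF hF.
by rewrite mulmxBl !mulmxBr iE EF FE iF subrr subr0.
Qed.

Lemma loewner_sub n (E F : 'M[C]_n) : E^t* = E -> E *m E = E -> F *m F = F ->
  (forall v, 0 <= sf (E - F) v v) -> E *m F = F.
Proof.
move=> hE iE iF psdEF.
suff : (1%:M - E) *m F = 0 by rewrite mulmxBl mul1mx => /eqP; rewrite subr_eq0 => /eqP.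
apply: mx0_cols => y; rewrite -mulmxA; set z := F *m y.
have Fz : F *m z = z by rewrite /z mulmxA iF.
apply: norm_eq0.
have k1 : ((1%:M - E) *m z)^t* *m ((1%:M - E) *m z) = z^t* *m z - z^t* *m E *m z.
  have -> : ((1%:M - E) *m z)^t* *m ((1%:M - E) *m z) = z^t* *m ((1%:M - E)^t* *m (1%:M - E)) *m z.
    by rewrite adjM !mulmxA.
  have -> : (1%:M - E)^t* *m (1%:M - E) = 1%:M - E.
    by rewrite adjB adj1 hE mulmxBl mul1mx mulmxBr mulmx1 iE subrr subr0.
  by rewrite mulmxBr mulmxBl mulmx1.
have h := psdEF z; rewrite /sf mulmxBr mulmxBl -(mulmxA _ F z) Fz !mxE -/(_ - _) subr_ge0 in h.
have h2 := norm_ge0 ((1%:M - E) *m z); rewrite k1 !mxE -/(_ - _) subr_ge0 in h2.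
rewrite k1 !mxE -/(_ - _); apply/eqP; rewrite subr_eq0; apply/eqP/le_anti; by rewrite h h2.
Qed.

Lemma adj0 m n : (0 : 'M[C]_(m, n))^t* = 0.
Proof. by apply/matrixP => i j; rewrite !mxE conjC0. Qed.

Lemma orbit_rp d (T : 'M[C]_d -> 'M_d) n : (1 <= n)%N ->
  exists m (M : 'M[C]_(d, m)), orbit_support T n = range_proj M.
Proof. by case: n => // n _; rewrite /orbit_support big_ord_recl /pjoin; eexists; eexists. Qed.

End Aux.

Unset Implicit Arguments.
Set Strict Implicit.
Set Printing Implicit Defensive.

Theorem proposition4p18 (C : numClosedFieldType) (d r : nat)
    (V : 'I_r -> 'M[C]_d) (n : nat) :
  loewner_le (kraus V 1%:M) 1%:M ->
  stab_index (kraus V) n ->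
  let Q := orbit_support (kraus V) n in
  (corner_faithful (kraus V) Q <->
     (forall v : 'cV[C]_d, (exists w : 'cV[C]_d, v = Q *m w) ->
        (forall i : 'I_r, adj (V i) *m v = 0) -> v = 0))
  /\
  (corner_faithful (kraus V) Q <->
     (forall v : 'cV[C]_d, (exists w : 'cV[C]_d, v = Q *m w) -> v != 0 ->
        exists i : 'I_r, adj (V i) *m v != 0)).
Proof.
move=> _ [n1 _ _]; cbv zeta; set Q := orbit_support (kraus V) n.
have [m [M QE]] := orbit_rp (kraus V) n1.
have hQ : Q^t* = Q by rewrite /Q QE; case: (rp_facts M).
have iQ : Q *m Q = Q by rewrite /Q QE; case: (rp_facts M).
have main : corner_faithful (kraus V) Q <-> (forall v : 'cV[C]_d, (exists w : 'cV[C]_d, v = Q *m w) ->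
     (forall i, adj (V i) *m v = 0) -> v = 0).
  split.
  - move=> CF v [w vE] hV; apply/eqP; apply: contraT => vnz.
    have Qv : Q *m v = v by rewrite vE mulmxA iQ.
    pose x := v *m v^t*.
    have psdx : psd x.
      move=> y.
      have -> : y^t* *m x *m y = (v^t* *m y)^t* *m (v^t* *m y) by rewrite adjM adjK !mulmxA.
      exact: norm_ge0.
    have xnz : x != 0.
      apply/eqP => x0.
      have : v^t* *m x *m v = (v^t* *m v) *m (v^t* *m v) by rewrite /x !mulmxA.
      rewrite x0 mulmx0 mul0mx => h0; have := congr1 (fun A : 'M[C]_1 => A 0 0) h0 => /=.
      rewrite [RHS]mxE big_ord1 [LHS]mxE => /esym/eqP; rewrite mulf_eq0 orbb => /eqP/norm_eq0 v0.
      by rewrite v0 eqxx in vnz.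
    have Tx0 : kraus V x = 0.
      by rewrite /kraus; apply: big1 => i _; rewrite /x mulmxA hV mul0mx mul0mx.
    have le : loewner_le (supp x) Q.
      have [hS iS _ [Y SE]] := rp_facts x.
      apply: proj_le => //; rewrite /supp SE mulmxA /x mulmxA Qv //.
    by have := CF x psdx xnz le; rewrite Tx0 eqxx.
  - move=> H x psdx xnz le; apply/negP => /eqP Tx0.
    have hx := psd_herm psdx.
    have xV : forall i, x *m V i = 0.
      move=> i; apply: mx0_cols => y; rewrite -mulmxA; refine (psd_ker psdx _).
      have eqj : forall j, y^t* *m (adj (V j) *m x *m V j) *m y
                   = (V j *m y)^t* *m x *m (V j *m y).
        by move=> j; rewrite /adj adjM !mulmxA.
      have : sf (kraus V x) y y = 0 by rewrite Tx0 /sf mulmx0 mul0mx mxE.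
      rewrite /kraus /sf mulmx_sumr mulmx_suml (eq_bigr _ (fun j _ => eqj j)) summxE.
      move=> /psumr_eq0P h; apply: h => // j _; exact: psdx.
    have [y vnz] : exists y : 'cV[C]_d, x *m y != 0.
      case: (boolP [exists j : 'I_d, x *m (delta_mx j 0 : 'cV[C]_d) != 0]) => [/existsP [j hj]|/existsPn h].
        by exists (delta_mx j 0).
      exfalso; move/eqP: xnz; apply; apply/matrixP => a b.
      by have := h b; rewrite negbK -colE => /eqP/matrixP/(_ a 0); rewrite !mxE.
    have [hS iS Sx _] := rp_facts x.
    have QS : Q *m supp x = supp x by apply: loewner_sub.
    have hv : exists w, x *m y = Q *m w.
      by exists (x *m y); rewrite -[in RHS]Sx !mulmxA -/(supp x) QS Sx.
    have hV : forall i, adj (V i) *m (x *m y) = 0.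
      move=> i; have e : (x *m V i)^t* = adj (V i) *m x by rewrite adjM hx.
      by rewrite mulmxA -e xV adj0 mul0mx.
    by move: vnz; rewrite (H _ hv hV) eqxx.
split; first exact: main.
split => [CF v hv vnz | H].
- case: (boolP [exists i, adj (V i) *m v != 0]) => [/existsP // | /existsPn h].
  exfalso; move/eqP: vnz; apply; apply: (main.1 CF v hv) => i.
  by apply/eqP; move: (h i); rewrite negbK.
- apply/main => v hv hV; apply/eqP; apply: contraT => vnz.
  by have [i] := H v hv vnz; rewrite hV eqxx.
Qed.
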